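(* For every $d\ge1$, $\mathsf{sumPI}(\mathcal{A}^d)=2.5^d$.
   Context: $\mathcal{A}:\{0,1\}^4\to\{0,1\}$ is the function with $\mathcal{A}(x)=1$ iff $x\in\{0000,0001,0011,0111,1111,1110,1100,1000\}$, i.e. iff $x_1\le x_2\le x_3\le x_4$ or $x_1\ge x_2\ge x_3\ge x_4$. For $f:\{0,1\}^n\to\{0,1\}$, its $d$th iteration $f^d:\{0,1\}^{n^d}\to\{0,1\}$ is defined by $f^1=f$ and $f^{d+1}(x)=f\big(f^d(x_1,\dots,x_{n^d}),\ f^d(x_{n^d+1},\dots,x_{2n^d}),\ \dots,\ f^d(x_{(n-1)n^d+1},\dots,x_{n^{d+1}})\big)$. For $g:\{0,1\}^N\to\{0,1\}$, with $p=\{p_x\}$ ranging over families of probability distributions on $[N]$, $$\mathsf{sumPI}(g)=\min_{p}\ \max_{x,y:\ g(x)\neq g(y)} \frac{1}{\sum_{i:\,x_i\neq y_i}\sqrt{p_x(i)p_y(i)}}.$$ *)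

(* Defs.v *)
From HB Require Import structures.
From mathcomp Require Import all_boot all_order all_algebra.
From mathcomp Require Import reals constructive_ereal.
Set Implicit Arguments. Unset Strict Implicit. Unset Printing Implicit Defensive.
Import Order.TTheory GRing.Theory Num.Theory.
Local Open Scope ring_scope.

(* Boolean strings of length N: finite functions 'I_N -> bool; x i is the
   (i+1)-th bit (0-indexed coordinates). *)
Notation bits N := {ffun 'I_N -> bool}.

Definition Afun (x1 x2 x3 x4 : bool) : bool :=
  [&& (x1 <= x2)%N, (x2 <= x3)%N & (x3 <= x4)%N] ||
  [&& (x2 <= x1)%N, (x3 <= x2)%N & (x4 <= x3)%N].

Fixpoint iterA (d : nat) (x : nat -> bool) : bool :=
  match d with
  | 0 => x 0%N
  | d'.+1 => Afun (iterA d' (fun k => x k))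
                  (iterA d' (fun k => x (4 ^ d' + k)%N))
                  (iterA d' (fun k => x (2 * 4 ^ d' + k)%N))
                  (iterA d' (fun k => x (3 * 4 ^ d' + k)%N))
  end.

Definition Aiter (d : nat) (x : bits (4 ^ d)) : bool :=
  iterA d (fun k => match insub k with Some i => x i | None => false end).

Definition prob_family (R : realType) (N : nat) (p : bits N -> 'I_N -> R) : Prop :=
  forall x, (forall i, 0 <= p x i) /\ \sum_(i < N) p x i = 1.

Definition overlap (R : realType) (N : nat) (p : bits N -> 'I_N -> R)
  (x y : bits N) : R :=
  \sum_(i < N | x i != y i) Num.sqrt (p x i * p y i).

Definition pair_val (R : realType) (N : nat) (p : bits N -> 'I_N -> R)
  (x y : bits N) : \bar R :=
  if overlap p x y == 0 then +oo%E else ((overlap p x y)^-1)%:E.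

Definition sumPI_obj (R : realType) (N : nat) (g : bits N -> bool)
  (p : bits N -> 'I_N -> R) : \bar R :=
  \big[Order.max/-oo%E]_(xy : bits N * bits N | g xy.1 != g xy.2)
     pair_val p xy.1 xy.2.

(* "sumPI(g) = v", where sumPI is a minimum over probability families:
   the minimum is attained with value v. *)
Definition sumPI_is (R : realType) (N : nat) (g : bits N -> bool) (v : \bar R) : Prop :=
  (exists2 p, prob_family p & sumPI_obj g p = v) /\
  (forall p, prob_family p -> (v <= sumPI_obj g p)%E).

(* Main.v *)
Require Import Defs.
From HB Require Import structures.
From mathcomp Require Import all_boot all_order all_algebra.
From mathcomp Require Import reals constructive_ereal.
From mathcomp Require Import ring lra zify.
Set Implicit Arguments. Unset Strict Implicit. Unset Printing Implicit Defensive.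
Import Order.TTheory GRing.Theory Num.Theory.

Local Close Scope ring_scope.
Local Open Scope ring_scope.

Definition probf {R : realType} {T V : finType} (p : T -> V -> R) : Prop :=
  forall x, (forall v, 0 <= p x v) /\ \sum_v p x v = 1.
Definition ovl {R : realType} {T V : finType} (q : T -> V -> bool) (p : T -> V -> R) (x y : T) : R :=
  \sum_(v | q x v != q y v) Num.sqrt (p x v * p y v).
Definition UB {R : realType} {T V : finType} (q : T -> V -> bool) (g : T -> bool) (c : R) : Prop :=
  exists2 p : T -> V -> R, probf p & forall x y, g x != g y -> c <= ovl q p x y.
Definition Cert {R : realType} {T V : finType} (q : T -> V -> bool) (g : T -> bool) (lam s : R) : Prop :=
  exists (G : T -> T -> R) (dl : T -> R) (w : T -> T -> V -> R) (om : T -> T -> R),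
  [/\ (forall x y, [/\ 0 <= G x y, G x y = G y x & (g x = g y -> G x y = 0)]),
      (forall x, 0 <= dl x) /\ (forall b, exists x, g x = b /\ 0 < dl x),
      (forall x, lam * dl x <= \sum_y G x y * dl y),
      (forall x y v, 0 < w x y v /\ w x y v * w y x v = 1) /\
        (forall x v, \sum_(y | q x v != q y v) G x y * w x y v <= s) &
      (forall x y, 0 < om x y /\ om x y * om y x = 1) /\ (forall x, \sum_y G x y * om x y <= lam)].

Lemma amgm (R : realType) (a b w w' : R) : 0 < w -> w * w' = 1 -> 2 * (a * b) <= w * a ^+ 2 + w' * b ^+ 2.
Proof. move=> w0 ww. have h : 0 <= (w * a - b) ^+ 2 by rewrite sqr_ge0. nra. Qed.

Lemma cert_key (R : realType) (T V : finType) (q : T -> V -> bool) (s : R)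
  (G : T -> T -> R) (dl : T -> R) (w : T -> T -> V -> R) (p : T -> V -> R) :
  probf p ->
  (forall x y, 0 <= G x y /\ G x y = G y x) ->
  (forall x y v, 0 < w x y v /\ w x y v * w y x v = 1) ->
  (forall x v, \sum_(y | q x v != q y v) G x y * w x y v <= s) ->
  \sum_x \sum_y G x y * dl x * dl y * ovl q p x y <= s * \sum_x dl x ^+ 2.
Proof.
move=> hp hG hw hs.
have E1 : \sum_x \sum_y G x y * dl x * dl y * ovl q p x y =
   \sum_v \sum_x \sum_y (if q x v != q y v then
        G x y * (dl x * Num.sqrt (p x v)) * (dl y * Num.sqrt (p y v)) else 0).
  rewrite [RHS]exchange_big /=; apply: eq_bigr => x _.
  rewrite [RHS]exchange_big /=; apply: eq_bigr => y _.
  rewrite /ovl mulr_sumr big_mkcond /=; apply: eq_bigr => v _.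
  case: ifP => // _.
  rewrite sqrtrM; last by case: (hp x) => h _; exact: h.
  ring.
have E2 : forall v, \sum_x \sum_y (if q x v != q y v then
        G x y * (dl x * Num.sqrt (p x v)) * (dl y * Num.sqrt (p y v)) else 0)
     <= \sum_x \sum_y (if q x v != q y v then G x y * w x y v * (dl x ^+ 2 * p x v) else 0).
  move=> v.
  set a := fun x => dl x * Num.sqrt (p x v).
  have Ha : forall x, a x ^+ 2 = dl x ^+ 2 * p x v.
    move=> x; rewrite /a exprMn sqr_sqrtr //; by case: (hp x) => h _; exact: h.
  have S : \sum_x \sum_y (if q x v != q y v then G x y * w y x v * (dl y ^+ 2 * p y v) else 0)
         = \sum_x \sum_y (if q x v != q y v then G x y * w x y v * (dl x ^+ 2 * p x v) else 0).
    rewrite exchange_big /=; apply: eq_bigr => x _; apply: eq_bigr => y _.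
    by rewrite eq_sym; case: (hG x y) => _ ->.
  apply: (le_trans (y := \sum_x \sum_y (if q x v != q y v then
       (G x y * w x y v * (dl x ^+ 2 * p x v) + G x y * w y x v * (dl y ^+ 2 * p y v)) / 2 else 0))).
    apply: ler_sum => x _; apply: ler_sum => y _.
    case: ifP => _ //.
    rewrite -!Ha /=.
    case: (hG x y) => G0 _; case: (hw x y v) => w0 ww.
    have := amgm (a x) (a y) w0 ww.
    move=> h. rewrite ler_pdivlMr ?ltr0n //. have := ler_wpM2l G0 h. move=> h2.
    have -> : G x y * (dl x * Num.sqrt (p x v)) * (dl y * Num.sqrt (p y v)) = G x y * (a x * a y) by rewrite /a; ring.
    lra.
  have -> : forall (F1 F2 : T -> T -> R), \sum_x \sum_y (if q x v != q y v then (F1 x y + F2 x y) / 2 else 0)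
     = (\sum_x \sum_y (if q x v != q y v then F1 x y else 0) + \sum_x \sum_y (if q x v != q y v then F2 x y else 0)) / 2.
    move=> F1 F2; rewrite -big_split mulr_suml; apply: eq_bigr => x _.
    rewrite -big_split mulr_suml; apply: eq_bigr => y _.
    by case: (q x v != q y v) => /=; rewrite ?addr0 ?mul0r.
  rewrite S. by rewrite mulrDl -splitr.
apply: (le_trans (y := \sum_v \sum_x \sum_y (if q x v != q y v then G x y * w x y v * (dl x ^+ 2 * p x v) else 0))).
  by rewrite E1; apply: ler_sum => v _; exact: E2.
rewrite exchange_big /= mulr_sumr; apply: ler_sum => x _.
have -> : \sum_v \sum_y (if q x v != q y v then G x y * w x y v * (dl x ^+ 2 * p x v) else 0)
   = \sum_v (dl x ^+ 2 * p x v) * \sum_(y | q x v != q y v) G x y * w x y v.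
  apply: eq_bigr => v _; rewrite [in RHS]big_mkcond mulr_sumr; apply: eq_bigr => y _.
  by case: ifP => _; rewrite ?mulr0 // mulrC.
apply: (le_trans (y := \sum_v (dl x ^+ 2 * p x v) * s)).
  apply: ler_sum => v _; apply: ler_wpM2l; last exact: hs.
  by apply: mulr_ge0; [exact: sqr_ge0 | case: (hp x) => h _; exact: h].
by rewrite -mulr_suml -mulr_sumr; case: (hp x) => _ ->; rewrite mulr1 mulrC.
Qed.

Lemma cert_LB (R : realType) (T V : finType) (q : T -> V -> bool) (g : T -> bool) (lam s : R) :
  0 < lam -> 0 <= s -> Cert q g lam s ->
  forall p, probf p -> exists x y, g x != g y /\ ovl q p x y <= s / lam.
Proof.
move=> lam0 s0 [G [dl [w [om [hG [hd0 hdb] hev [hw hs] _]]]]] p hp.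
case: (boolP [exists x, [exists y, (g x != g y) && (ovl q p x y <= s / lam)]]).
  by case/existsP => x /existsP [y /andP [h1 h2]]; exists x, y.
rewrite negb_exists => /forallP H.
have H' : forall x y, g x != g y -> s / lam < ovl q p x y.
  move=> x y hxy; have := H x; rewrite negb_exists => /forallP /(_ y).
  by rewrite hxy /= -ltNge.
exfalso.
have hG' : forall x y, 0 <= G x y /\ G x y = G y x by move=> x y; case: (hG x y).
have key := cert_key dl hp hG' hw hs.
set S2 := \sum_x dl x ^+ 2.
have S2pos : 0 < S2.
  case: (hdb true) => x0 [_ hx0].
  rewrite /S2 (bigD1 x0) //=.
  have : 0 <= \sum_(x | x != x0) dl x ^+ 2 by apply: sumr_ge0 => *; apply: sqr_ge0.
  have := exprn_gt0 2 hx0. lra.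
have HL : lam * S2 <= \sum_x \sum_y G x y * dl x * dl y.
  rewrite /S2 mulr_sumr; apply: ler_sum => x _.
  have := ler_wpM2l (hd0 x) (hev x).
  rewrite mulr_sumr => h.
  apply: (le_trans _ (le_trans h _)); first by rewrite le_eqVlt; apply/orP; left; apply/eqP; ring.
  by rewrite le_eqVlt; apply/orP; left; apply/eqP/eq_bigr => y _; ring.
case: (boolP [exists xy : T * T, 0 < G xy.1 xy.2 * dl xy.1 * dl xy.2]); last first.
  rewrite negb_exists => /forallP Hn.
  have : \sum_x \sum_y G x y * dl x * dl y <= 0.
    apply: sumr_le0 => x _; apply: sumr_le0 => y _.
    by have := Hn (x, y); rewrite /= -leNgt.
  have := mulr_gt0 lam0 S2pos. lra.
case/existsP => [[x0 y0]] /= hpos.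
have g0 : g x0 != g y0.
  apply/negP => /eqP e; move: hpos; by case: (hG x0 y0) => _ _ /(_ e) ->; rewrite !mul0r ltxx.
have strict : s / lam * \sum_x \sum_y G x y * dl x * dl y <
              \sum_x \sum_y G x y * dl x * dl y * ovl q p x y.
  rewrite !pair_bigA mulr_sumr /= [X in X < _](bigD1 (x0, y0)) //= [X in _ < X](bigD1 (x0, y0)) //=.
  apply: ltr_leD.
    by rewrite [X in X < _]mulrC ltr_pM2l //; exact: H'.
  apply: ler_sum => [[x y]] _ /=.
  case: (eqVneq (g x) (g y)) => e.
    by case: (hG x y) => _ _ /(_ e) ->; rewrite !mul0r mulr0.
  rewrite mulrC; apply: ler_wpM2l; last exact: ltW (H' x y e).
  by apply: mulr_ge0; [apply: mulr_ge0|]; [case: (hG x y)|exact: hd0|exact: hd0].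
have : s / lam * (lam * S2) <= s / lam * \sum_x \sum_y G x y * dl x * dl y.
  by apply: ler_wpM2l => //; apply: divr_ge0 => //; exact: ltW.
have -> : s / lam * (lam * S2) = s * S2 by rewrite mulrA divfK // gt_eqF.
move: key; rewrite -/S2 => key. lra.
Qed.

Local Close Scope ring_scope.
Local Open Scope ring_scope.

Definition zx {T : finType} {n : nat} (g : T -> bool) (x : {ffun 'I_n -> T}) : {ffun 'I_n -> bool} :=
  [ffun k => g (x k)].
Definition cq {T V : finType} {n : nat} (q : T -> V -> bool) (x : {ffun 'I_n -> T}) (kv : 'I_n * V) : bool :=
  q (x kv.1) kv.2.

Lemma sum_pred1 (R : realType) (T : finType) (a : T) (X : T -> R) :
  \sum_z (a == z)%:R * X z = X a.
Proof.
rewrite (bigD1 a) //= eqxx mul1r big1 ?addr0 // => z hz.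
by rewrite eq_sym (negbTE hz) mul0r.
Qed.

Lemma prod_ind (R : realType) (T : finType) n (g : T -> bool) (y : {ffun 'I_n -> T}) (z : {ffun 'I_n -> bool}) :
  \prod_k ((g (y k) == z k)%:R : R) = (zx g y == z)%:R.
Proof.
case: eqP => [<-|ne].
  by rewrite big1 // => k _; rewrite ffunE eqxx.
case: (boolP [exists k, g (y k) != z k]).
  by case/existsP => k hk; rewrite (bigD1 k) //= (negbTE hk) mul0r.
rewrite negb_exists => /forallP hk; exfalso; apply: ne; apply/ffunP => k.
by rewrite ffunE; apply/eqP; move: (hk k); rewrite negbK.
Qed.

Lemma sum_split (R : realType) (T : finType) n (g : T -> bool) (F : {ffun 'I_n -> bool} -> R)
  (h : 'I_n -> T -> R) :
  \sum_(y : {ffun 'I_n -> T}) F (zx g y) * \prod_k h k (y k) =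
  \sum_(z : {ffun 'I_n -> bool}) F z * \prod_k \sum_(t | g t == z k) h k t.
Proof.
have E : forall z : {ffun 'I_n -> bool}, \prod_k \sum_(t | g t == z k) h k t =
   \sum_(y : {ffun 'I_n -> T}) (zx g y == z)%:R * \prod_k h k (y k).
  move=> z.
  have -> : \prod_k \sum_(t | g t == z k) h k t = \prod_k \sum_t ((g t == z k)%:R * h k t).
    apply: eq_bigr => k _; rewrite big_mkcond; apply: eq_bigr => t _.
    by case: (g t == z k); rewrite ?mul1r ?mul0r.
  rewrite bigA_distr_bigA; apply: eq_bigr => y _.
  by rewrite big_split /= prod_ind.
under [RHS]eq_bigr do rewrite E mulr_sumr.
rewrite exchange_big /=; apply: eq_bigr => y _.
rewrite -[LHS](sum_pred1 (zx g y) (fun z => F z * \prod_k h k (y k))).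
by apply: eq_bigr => z _; rewrite mulrCA.
Qed.

Definition Hm {R : realType} {T : finType} (g : T -> bool) (G : T -> T -> R) (lam : R) (s t : T) : R :=
  if g s != g t then G s t else lam * (s == t)%:R.
Definition Om {R : realType} {T : finType} (g : T -> bool) (om : T -> T -> R) (s t : T) : R :=
  if g s != g t then om s t else 1.

Lemma bool_third (a b c : bool) : b != a -> c != b -> c = a.
Proof. by case: a; case: b; case: c. Qed.

Lemma sum_sub (R : realType) (T : finType) (P : pred T) (F : T -> R) :
  (forall t, 0 <= F t) -> \sum_(t | P t) F t <= \sum_t F t.
Proof.
move=> h; rewrite big_mkcond; apply: ler_sum => t _; case: (P t) => //.
Qed.

Lemma fac_eig (R : realType) (T : finType) (g : T -> bool) (G : T -> T -> R) (dl : T -> R) (lam : R)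
  (hG : forall s t, [/\ 0 <= G s t, G s t = G t s & (g s = g t -> G s t = 0)])
  (hev : forall s, lam * dl s <= \sum_t G s t * dl t) s b :
  lam * dl s <= \sum_(t | g t == b) Hm g G lam s t * dl t.
Proof.
case: (eqVneq b (g s)) => [->|ne].
  rewrite (bigD1 s) //= big1 ?addr0; first by rewrite /Hm eqxx /= eqxx mulr1.
  move=> t /andP [/eqP ht hts]; rewrite /Hm ht eqxx /= eq_sym (negbTE hts).
  by rewrite mulr0 mul0r.
apply: (le_trans (hev s)).
rewrite (bigID (fun t => g t == b)) /= [X in _ + X]big1 ?addr0.
  rewrite le_eqVlt; apply/orP; left; apply/eqP; apply: eq_bigr => t /eqP ht.
  by rewrite /Hm ht eq_sym ne.
move=> t ht; have e := bool_third ne ht.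
by case: (hG s t) => _ _ ->; rewrite ?mul0r.
Qed.

Lemma fac_om (R : realType) (T : finType) (g : T -> bool) (G : T -> T -> R) (om : T -> T -> R) (lam : R)
  (hG : forall s t, [/\ 0 <= G s t, G s t = G t s & (g s = g t -> G s t = 0)])
  (hom : forall s t, 0 < om s t) (hs : forall s, \sum_t G s t * om s t <= lam) s b :
  \sum_(t | g t == b) Hm g G lam s t * Om g om s t <= lam.
Proof.
case: (eqVneq b (g s)) => [->|ne].
  rewrite (bigD1 s) //= big1 ?addr0; first by rewrite /Hm /Om eqxx /= eqxx mulr1 mulr1.
  move=> t /andP [/eqP ht hts]; rewrite /Hm ht eqxx /= eq_sym (negbTE hts).
  by rewrite mulr0 mul0r.
apply: le_trans (hs s).
apply: (le_trans _ (sum_sub (fun t => g t == b) _)).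
  rewrite le_eqVlt; apply/orP; left; apply/eqP; apply: eq_bigr => t /eqP ht.
  by rewrite /Hm /Om ht eq_sym ne.
move=> t; apply: mulr_ge0; [by case: (hG s t) | exact: ltW].
Qed.

Lemma fac_w (R : realType) (T V : finType) (q : T -> V -> bool) (g : T -> bool) (G : T -> T -> R)
  (w : T -> T -> V -> R) (lam s0 : R)
  (hG : forall s t, [/\ 0 <= G s t, G s t = G t s & (g s = g t -> G s t = 0)])
  (hw : forall s t v, 0 < w s t v) (hs : forall s v, \sum_(t | q s v != q t v) G s t * w s t v <= s0)
  s v b :
  \sum_(t | g t == b) (if q s v != q t v then Hm g G lam s t * w s t v else 0) <= (g s != b)%:R * s0.
Proof.
case: (eqVneq b (g s)) => [->|ne].
  rewrite /= mul0r big1 // => t /eqP ht.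
  case: (eqVneq s t) => [<-|nst]; first by rewrite eqxx.
  by rewrite /Hm ht eqxx /= (negbTE nst) mulr0 mul0r if_same.
rewrite /= mul1r.
apply: le_trans (hs s v).
apply: (le_trans (y := \sum_t (if q s v != q t v then G s t * w s t v else 0))); last first.
  by rewrite [X in _ <= X]big_mkcond.
apply: (le_trans _ (sum_sub (fun t => g t == b) _)).
  rewrite le_eqVlt; apply/orP; left; apply/eqP; apply: eq_bigr => t /eqP ht.
  by rewrite /Hm ht (eq_sym (g s)) ne.
move=> t; case: ifP => // _; apply: mulr_ge0; [by case: (hG s t) | exact: ltW].
Qed.

Lemma prod_ne (R : realType) n (k : 'I_n) (lam : R) : \prod_(l | l != k) lam = lam ^+ n.-1.
Proof.
have := prodr_const (predC1 k) lam; rewrite cardC1 card_ord => <-.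
by apply: eq_bigl => l; rewrite !inE.
Qed.

Lemma eqle (R : realType) (a b : R) : a = b -> a <= b.
Proof. by move=> ->. Qed.

Lemma prodD1 (R : realType) n (k : 'I_n) (F : 'I_n -> R) : \prod_l F l = F k * \prod_(l | l != k) F l.
Proof. by rewrite (bigD1 k). Qed.
Lemma prod_neq_if (R : realType) n (k : 'I_n) (A B : 'I_n -> R) :
  \prod_(l | l != k) (if l == k then A l else B l) = \prod_(l | l != k) B l.
Proof. by apply: eq_bigr => l /negbTE ->. Qed.

Lemma cert_comp (R : realType) (T V : finType) n (q : T -> V -> bool) (g : T -> bool)
  (f : {ffun 'I_n -> bool} -> bool) (lamf sf lam s : R) :
  0 <= lam -> 0 <= s ->
  Cert (fun (z : {ffun 'I_n -> bool}) (k : 'I_n) => z k) f lamf sf ->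
  Cert q g lam s ->
  Cert (cq q) (fun x : {ffun 'I_n -> T} => f (zx g x)) (lamf * lam ^+ n) (sf * s * lam ^+ n.-1).
Proof.
move=> lam0 s0 [Gf [df [wf [omf [hGf [hdf0 hdfb] hevf [hwf hsf] [homf homsf]]]]]]
            [G [dl [w [om [hG [hd0 hdb] hev [hw hs] [hom homs]]]]]].
pose G' := fun x y : {ffun 'I_n -> T} => Gf (zx g x) (zx g y) * \prod_k Hm g G lam (x k) (y k).
pose dl' := fun x : {ffun 'I_n -> T} => df (zx g x) * \prod_k dl (x k).
pose w' := fun (x y : {ffun 'I_n -> T}) (kv : 'I_n * V) => wf (zx g x) (zx g y) kv.1 *
   w (x kv.1) (y kv.1) kv.2 * \prod_(l | l != kv.1) Om g om (x l) (y l).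
pose om' := fun x y : {ffun 'I_n -> T} => omf (zx g x) (zx g y) * \prod_k Om g om (x k) (y k).
have Hm0 : forall s t, 0 <= Hm g G lam s t.
  move=> s' t; rewrite /Hm; case: ifP => _; [by case: (hG s' t) | by apply: mulr_ge0].
have Hmsym : forall s t, Hm g G lam s t = Hm g G lam t s.
  move=> s' t; rewrite /Hm (eq_sym (g t)) (eq_sym t); case: ifP => _ //; by case: (hG s' t).
have Om0 : forall s t, 0 < Om g om s t.
  by move=> s' t; rewrite /Om; case: ifP => _; [case: (hom s' t) | exact: ltr01].
have Omr : forall s t, Om g om s t * Om g om t s = 1.
  move=> s' t; rewrite /Om (eq_sym (g t)); case: ifP => _; [by case: (hom s' t) | exact: mulr1].
have Gf0 : forall z z', 0 <= Gf z z' by move=> z z'; case: (hGf z z').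
have hG1 : forall s t, [/\ 0 <= G s t, G s t = G t s & (g s = g t -> G s t = 0)] := hG.
exists G', dl', w', om'; split.
- move=> x y; split.
  + by apply: mulr_ge0 => //; apply: prodr_ge0 => k _; exact: Hm0.
  + rewrite /G'; congr (_ * _); first by case: (hGf (zx g x) (zx g y)).
    by apply: eq_bigr => k _; exact: Hmsym.
  + by move=> e; rewrite /G'; case: (hGf (zx g x) (zx g y)) => _ _ ->; rewrite ?mul0r.
- split.
    by move=> x; apply: mulr_ge0; [exact: hdf0 | apply: prodr_ge0 => k _; exact: hd0].
  move=> b; case: (hdfb b) => z [fz dz].
  case: (hdb true) => t1 [g1 d1]; case: (hdb false) => t0 [g0 d0].
  exists [ffun k => if z k then t1 else t0].
  have ez : zx g [ffun k => if z k then t1 else t0] = z.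
    by apply/ffunP => k; rewrite !ffunE; case: (z k).
  rewrite ez; split => //; rewrite /dl' ez; apply: mulr_gt0 => //.
  by apply: prodr_gt0 => k _; rewrite ffunE; case: (z k).
- move=> x.
  have E : \sum_y G' x y * dl' y = \sum_y (Gf (zx g x) (zx g y) * df (zx g y)) *
        \prod_k (Hm g G lam (x k) (y k) * dl (y k)).
    by apply: eq_bigr => y _; rewrite /G' /dl' big_split /=; ring.
  rewrite E (sum_split g (fun z => Gf (zx g x) z * df z) (fun k t => Hm g G lam (x k) t * dl t)).
  apply: (le_trans (y := \sum_z Gf (zx g x) z * df z * \prod_k (lam * dl (x k)))).
    rewrite -mulr_suml /dl'.
    have h := hevf (zx g x).
    have -> : \prod_k (lam * dl (x k)) = lam ^+ n * \prod_k dl (x k).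
      by rewrite big_split /= prodr_const card_ord.
    have P0 : 0 <= lam ^+ n * \prod_k dl (x k).
      by apply: mulr_ge0; [exact: exprn_ge0 | apply: prodr_ge0 => k _; exact: hd0].
    apply: le_trans (ler_wpM2r P0 h); apply: eqle; ring.
  apply: ler_sum => z _; apply: ler_wpM2l.
    by apply: mulr_ge0; [exact: Gf0 | exact: hdf0].
  apply: ler_prod => k _; apply/andP; split.
    by apply: mulr_ge0 => //; exact: hd0.
  exact: fac_eig.
- split.
    move=> x y [k v]; rewrite /w' /=; split.
      apply: mulr_gt0; first apply: mulr_gt0; [by case: (hwf (zx g x) (zx g y) k) | by case: (hw (x k) (y k) v) |].
      by apply: prodr_gt0 => l _; exact: Om0.
    have -> : forall a b c a' b' c' : R, a*b*c*(a'*b'*c') = (a*a')*(b*b')*(c*c') by move=> *; ring.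
    case: (hwf (zx g x) (zx g y) k) => _ ->; case: (hw (x k) (y k) v) => _ ->.
    by rewrite -big_split /= big1 ?mulr1 // => l _; exact: Omr.
  move=> x [k v] /=.
  pose M := fun (l : 'I_n) (t : T) => if l == k then
       (if q (x k) v != q t v then Hm g G lam (x k) t * w (x k) t v else 0)
     else Hm g G lam (x l) t * Om g om (x l) t.
  have E : \sum_(y | cq q x (k, v) != cq q y (k, v)) G' x y * w' x y (k, v) =
     \sum_y (Gf (zx g x) (zx g y) * wf (zx g x) (zx g y) k) * \prod_l M l (y l).
    rewrite big_mkcond; apply: eq_bigr => y _ /=.
    rewrite /cq /= /G' /w' /= (prodD1 k (fun l => Hm g G lam (x l) (y l))).
    rewrite (prodD1 k (fun l => M l (y l))) /M eqxx prod_neq_if big_split /=.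
    case: (q (x k) v != q (y k) v); [ring | by rewrite !mul0r mulr0].
  rewrite E (sum_split g (fun z => Gf (zx g x) z * wf (zx g x) z k) M).
  pose B := fun (l : 'I_n) (z : {ffun 'I_n -> bool}) => if l == k then (g (x k) != z k)%:R * s else lam.
  apply: (le_trans (y := \sum_z Gf (zx g x) z * wf (zx g x) z k * \prod_l B l z)).
    apply: ler_sum => z _; apply: ler_wpM2l.
      by apply: mulr_ge0; [exact: Gf0 | case: (hwf (zx g x) z k) => /ltW].
    apply: ler_prod => l _; apply/andP; split.
      apply: sumr_ge0 => t _; rewrite /M; case: ifP => _; last by apply: mulr_ge0; [exact: Hm0 | exact: ltW].
      by case: ifP => // _; apply: mulr_ge0; [exact: Hm0 | case: (hw (x k) t v) => /ltW].
    rewrite /M /B; case: eqP => [->|_].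
      by apply: (fac_w _ hG _ hs) => s' t v'; case: (hw s' t v').
    by apply: (fac_om hG _ homs) => s' t; case: (hom s' t).
  have EB : forall z, \prod_l B l z = (g (x k) != z k)%:R * s * lam ^+ n.-1.
    move=> z; rewrite (prodD1 k (fun l => B l z)) /B eqxx prod_neq_if prod_ne //.
  under eq_bigr do rewrite EB.
  have := hsf (zx g x) k.
  rewrite /= => h.
  have -> : \sum_(z : {ffun 'I_n -> bool}) Gf (zx g x) z * wf (zx g x) z k * ((g (x k) != z k)%:R * s * lam ^+ n.-1)
     = (\sum_(z : {ffun 'I_n -> bool} | zx g x k != z k) Gf (zx g x) z * wf (zx g x) z k) * (s * lam ^+ n.-1).
    rewrite mulr_suml [in RHS]big_mkcond; apply: eq_bigr => z _; rewrite ffunE.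
    by case: (g (x k) != z k) => /=; ring.
  rewrite -mulrA; apply: ler_wpM2r => //; apply: mulr_ge0 => //; exact: exprn_ge0.
- split.
    move=> x y; rewrite /om'; split.
      apply: mulr_gt0; first by case: (homf (zx g x) (zx g y)).
      by apply: prodr_gt0 => l _; exact: Om0.
    have -> : forall a c a' c' : R, a*c*(a'*c') = (a*a')*(c*c') by move=> *; ring.
    case: (homf (zx g x) (zx g y)) => _ ->.
    by rewrite -big_split /= big1 ?mulr1 // => l _; exact: Omr.
  move=> x.
  have E : \sum_y G' x y * om' x y = \sum_y (Gf (zx g x) (zx g y) * omf (zx g x) (zx g y)) *
        \prod_k (Hm g G lam (x k) (y k) * Om g om (x k) (y k)).
    by apply: eq_bigr => y _; rewrite /G' /om' big_split /=; ring.
  rewrite E (sum_split g (fun z => Gf (zx g x) z * omf (zx g x) z) (fun k t => Hm g G lam (x k) t * Om g om (x k) t)).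
  apply: (le_trans (y := \sum_z Gf (zx g x) z * omf (zx g x) z * lam ^+ n)).
    apply: ler_sum => z _; apply: ler_wpM2l.
      by apply: mulr_ge0; [exact: Gf0 | case: (homf (zx g x) z) => /ltW].
    have -> : lam ^+ n = \prod_(l : 'I_n) lam by rewrite prodr_const card_ord.
    apply: ler_prod => l _; apply/andP; split.
      by apply: sumr_ge0 => t _; apply: mulr_ge0; [exact: Hm0 | exact: ltW].
    by apply: (fac_om hG _ homs) => s' t; case: (hom s' t).
  rewrite -mulr_suml; apply: ler_wpM2r; [exact: exprn_ge0 | exact: homsf].
Qed.

Local Close Scope ring_scope.
Local Open Scope ring_scope.

Lemma sum_pairR (R : realType) (I J : finType) (G : I * J -> R) :
  \sum_(p : I * J) G p = \sum_(i : I) \sum_(j : J) G (i, j).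
Proof. by rewrite pair_bigA; apply: eq_bigr => [[]]. Qed.

Lemma sum_reidx (R : realType) (I J : finType) (h : J -> I) (P : pred I) (F : I -> R) :
  bijective h -> \sum_(i | P i) F i = \sum_(j | P (h j)) F (h j).
Proof. by move=> bh; apply: reindex; apply: onW_bij. Qed.

Lemma ub_comp (R : realType) (T V : finType) n (q : T -> V -> bool) (g : T -> bool)
  (f : {ffun 'I_n -> bool} -> bool) (cf c : R) :
  0 <= c ->
  UB (fun (z : {ffun 'I_n -> bool}) (k : 'I_n) => z k) f cf ->
  UB q g c ->
  UB (cq q) (fun x : {ffun 'I_n -> T} => f (zx g x)) (cf * c).
Proof.
move=> c0 [pf hpf hf] [p hp hg].
have pf0 : forall z k, 0 <= pf z k by move=> z k; case: (hpf z) => h _; exact: h.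
have p0 : forall t v, 0 <= p t v by move=> t v; case: (hp t) => h _; exact: h.
exists (fun x kv => pf (zx g x) kv.1 * p (x kv.1) kv.2).
  move=> x; split.
    by move=> [k v]; apply: mulr_ge0.
  rewrite sum_pairR /=.
  under eq_bigr do rewrite -mulr_sumr.
  under eq_bigr => k _ do case: (hp (x k)) => _ ->.
  by under eq_bigr do rewrite mulr1; case: (hpf (zx g x)).
move=> x y hxy.
rewrite /ovl /cq big_mkcond sum_pairR /=.
have E : forall k, \sum_v (if q (x k) v != q (y k) v then
     Num.sqrt (pf (zx g x) k * p (x k) v * (pf (zx g y) k * p (y k) v)) else 0)
   = Num.sqrt (pf (zx g x) k * pf (zx g y) k) * ovl q p (x k) (y k).
  move=> k; rewrite /ovl mulr_sumr [in RHS]big_mkcond; apply: eq_bigr => v _.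
  case: (q (x k) v != q (y k) v); last by rewrite ?mulr0.
  rewrite -sqrtrM; last by apply: mulr_ge0.
  by congr Num.sqrt; ring.
under eq_bigr do rewrite E.
have := hf (zx g x) (zx g y) hxy.
rewrite /ovl => h.
apply: (le_trans (y := (\sum_(k | zx g x k != zx g y k) Num.sqrt (pf (zx g x) k * pf (zx g y) k)) * c)).
  by apply: ler_wpM2r.
rewrite mulr_suml [in X in X <= _]big_mkcond; apply: ler_sum => k _.
case: ifP => hk.
  apply: ler_wpM2l; first exact: sqrtr_ge0.
  by apply: hg; move: hk; rewrite !ffunE.
apply: mulr_ge0; first exact: sqrtr_ge0.
by rewrite /ovl; apply: sumr_ge0 => v _; exact: sqrtr_ge0.
Qed.

Lemma ub_iso (R : realType) (T T' V V' : finType) (q : T -> V -> bool) (q' : T' -> V' -> bool)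
  (g : T -> bool) (g' : T' -> bool) (phi : T -> T') (psi : V' -> V) (c : R) :
  bijective psi ->
  (forall x v', q x (psi v') = q' (phi x) v') -> (forall x, g x = g' (phi x)) ->
  UB q' g' c -> UB q g c.
Proof.
move=> bpsi hq hg [p hp hc].
have [psi' K1 K2] := bpsi.
exists (fun x v => p (phi x) (psi' v)).
  move=> x; split; first by move=> v; case: (hp (phi x)) => h _; exact: h.
  rewrite (sum_reidx _ _ bpsi) /=.
  by under eq_bigr do rewrite K1; case: (hp (phi x)).
move=> x y hxy.
rewrite /ovl (sum_reidx _ _ bpsi) /=.
under eq_bigr do rewrite K1.
have := hc (phi x) (phi y); rewrite -!hg => /(_ hxy).
rewrite /ovl => h; apply: (le_trans h); apply: eqle.
by apply: eq_bigl => v'; rewrite !hq.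
Qed.

Lemma cert_iso (R : realType) (T T' V V' : finType) (q : T -> V -> bool) (q' : T' -> V' -> bool)
  (g : T -> bool) (g' : T' -> bool) (phi : T -> T') (psi : V' -> V) (lam s : R) :
  bijective phi -> bijective psi ->
  (forall x v', q x (psi v') = q' (phi x) v') -> (forall x, g x = g' (phi x)) ->
  Cert q' g' lam s -> Cert q g lam s.
Proof.
move=> bphi bpsi hq hg [G [dl [w [om [hG [hd0 hdb] hev [hw hs] [hom homs]]]]]].
have [phi' P1 P2] := bphi.
have [psi' K1 K2] := bpsi.
exists (fun x y => G (phi x) (phi y)), (fun x => dl (phi x)),
  (fun x y v => w (phi x) (phi y) (psi' v)), (fun x y => om (phi x) (phi y)); split.
- move=> x y; case: (hG (phi x) (phi y)) => h1 h2 h3; split => // e.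
  by apply: h3; rewrite -!hg.
- split; first by move=> x; exact: hd0.
  move=> b; case: (hdb b) => x' [h1 h2]; exists (phi' x'); rewrite hg P2; split => //.
- move=> x; apply: (le_trans (hev (phi x))); apply: eqle.
  by rewrite (sum_reidx _ _ bphi).
- split; first by move=> x y v; exact: hw.
  move=> x v; apply: le_trans (hs (phi x) (psi' v)); apply: eqle.
  rewrite (sum_reidx _ _ bphi) /=; apply: eq_bigl => y.
  by rewrite -(K2 v) !hq K1.
- split; first by move=> x y; exact: hom.
  move=> x; apply: le_trans (homs (phi x)); apply: eqle.
  by rewrite (sum_reidx _ _ bphi).
Qed.

Local Close Scope ring_scope.

Definition Q4 : finType := (bool * bool * bool * bool)%type.
Definition qn (z : Q4) (k : nat) : bool := let: (a,b,c,d) := z in nth false [:: a; b; c; d] k.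
Definition qq (z : Q4) (k : 'I_4) : bool := qn z k.
Definition fA (z : Q4) : bool := let: (a,b,c,d) := z in Afun a b c d.
Definition flip (z : Q4) (k : nat) : Q4 := let: (a,b,c,d) := z in
  match k with 0 => (~~a,b,c,d) | 1 => (a,~~b,c,d) | 2 => (a,b,~~c,d) | _ => (a,b,c,~~d) end.
Definition rA (z : Q4) (k : nat) : nat := if fA z != fA (flip z k) then 2 else 1.
Definition tA (z z' : Q4) k : nat := if qn z k != qn z' k then rA z k * rA z' k else 0.
Definition dA (z z' : Q4) k : nat := if qn z k != qn z' k then 1 else 0.
Definition GA (z z' : Q4) : nat :=
  if (fA z != fA z') && (tA z z' 0 + tA z z' 1 + tA z z' 2 + tA z z' 3 == 4)
  then (if dA z z' 0 + dA z z' 1 + dA z z' 2 + dA z z' 3 == 1 then 3 else 2) else 0.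

Ltac cases4 z := let a := fresh in let b := fresh in let c := fresh in let d := fresh in
  case: z => [[[a b] c] d]; case: a; case: b; case: c; case: d.

Lemma sum_pair (I J : finType) (G : I * J -> nat) :
  \sum_(p : I * J) G p = \sum_(i : I) \sum_(j : J) G (i, j).
Proof. by rewrite pair_bigA; apply: eq_bigr => [[]]. Qed.
Lemma sumQ4 (F : Q4 -> nat) : \sum_(z : Q4) F z =
  \sum_(a : bool) \sum_(b : bool) \sum_(c : bool) \sum_(d : bool) F (a,b,c,d).
Proof. by rewrite sum_pair sum_pair sum_pair. Qed.

Lemma GA_sym z z' : GA z z' = GA z' z.
Proof. by cases4 z; cases4 z'. Qed.
Lemma GA_f z z' : fA z = fA z' -> GA z z' = 0%N.
Proof. by rewrite /GA => ->; rewrite eqxx. Qed.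
Lemma GA_row z : \sum_(z' : Q4) GA z z' = 10%N.
Proof. by rewrite sumQ4 !big_bool; cases4 z; vm_compute. Qed.
Lemma GA_schur z (k : 'I_4) : (\sum_(z' : Q4 | qq z k != qq z' k) GA z z' * rA z' k <= 4 * rA z k)%N.
Proof. rewrite big_mkcond sumQ4 !big_bool; cases4 z; case: k => [[|[|[|[|k]]]] Hk] //; vm_compute; reflexivity. Qed.
Lemma rA_pos z k : (0 < rA z k)%N.
Proof. by rewrite /rA; case: ifP. Qed.
Lemma rA_sq z : (\sum_(k < 4) rA z k ^ 2 = 10)%N.
Proof. by rewrite !big_ord_recl big_ord0; cases4 z; vm_compute. Qed.
Lemma ov_A z z' : fA z != fA z' -> (4 <= \sum_(k < 4 | qq z k != qq z' k) rA z k * rA z' k)%N.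
Proof.
rewrite big_mkcond !big_ord_recl big_ord0.
by cases4 z; cases4 z'; vm_compute.
Qed.

Local Open Scope ring_scope.

Lemma certQ4 (R : realType) : Cert qq fA (10 : R) 4.
Proof.
exists (fun z z' => (GA z z')%:R), (fun _ => 1),
  (fun z z' (k : 'I_4) => (rA z' k)%:R / (rA z k)%:R), (fun _ _ => 1); split.
- move=> z z'; split; [exact: ler0n | by rewrite GA_sym | by move/GA_f => ->].
- split; first by move=> _; exact: ler01.
  move=> b; exists (if b then (false,false,false,false) else (false,false,true,false)).
  by split; [case: b | exact: ltr01].
- move=> z; rewrite mulr1; under eq_bigr do rewrite mulr1.
  by rewrite -natr_sum GA_row.
- split.
    move=> z z' k; have h1 := rA_pos z k; have h2 := rA_pos z' k.
    split; first by apply: divr_gt0; rewrite ltr0n.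
    by rewrite mulrA divfK ?pnatr_eq0 -?lt0n // divff // pnatr_eq0 -lt0n.
  move=> z k.
  have -> : \sum_(y | qq z k != qq y k) (GA z y)%:R * ((rA y k)%:R / (rA z k)%:R)
     = (\sum_(y | qq z k != qq y k) GA z y * rA y k)%:R / (rA z k)%:R :> R.
    by rewrite natr_sum mulr_suml; apply: eq_bigr => y _; rewrite natrM mulrA.
  rewrite ler_pdivrMr ?ltr0n ?rA_pos //.
  have := GA_schur z k; rewrite -(ler_nat R) natrM => h; apply: le_trans h _.
  by rewrite mulrC.
- split; first by move=> *; split; [exact: ltr01 | exact: mulr1].
  move=> z; under eq_bigr do rewrite mulr1.
  by rewrite -natr_sum GA_row.
Qed.

Lemma ubQ4 (R : realType) : UB qq fA (2 / 5 : R).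
Proof.
exists (fun z (k : 'I_4) => ((rA z k)%:R / 10) ^+ 2 * 10).
  move=> z; split; first by move=> k; apply: mulr_ge0; [exact: sqr_ge0 | exact: ler0n].
  rewrite -mulr_suml.
  have -> : \sum_(k < 4) ((rA z k)%:R / 10 : R) ^+ 2 = (\sum_(k < 4) rA z k ^ 2)%:R / 100.
    rewrite natr_sum mulr_suml; apply: eq_bigr => k _; rewrite natrX expr_div_n.
    by congr (_ / _); rewrite expr2 -natrM.
  by rewrite rA_sq; field.
move=> z z' hz; rewrite /ovl.
have := ov_A hz; rewrite -(ler_nat R) natr_sum => h.
have -> : \sum_(v | qq z v != qq z' v)
      Num.sqrt (((rA z v)%:R / 10) ^+ 2 * 10 * (((rA z' v)%:R / 10) ^+ 2 * 10))
    = (\sum_(v | qq z v != qq z' v) (rA z v * rA z' v)%:R) / 10 :> R.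
  rewrite mulr_suml; apply: eq_bigr => k _.
  have -> : ((rA z k)%:R / 10) ^+ 2 * 10 * (((rA z' k)%:R / 10) ^+ 2 * 10)
     = ((rA z k * rA z' k)%:R / 10 : R) ^+ 2.
    by rewrite natrM; field.
  rewrite sqrtr_sqr ger0_norm //; apply: divr_ge0; exact: ler0n.
rewrite ler_pdivlMr ?ltr0n //.
apply: le_trans h; apply: eqle. by field.
Qed.

Definition o0 : 'I_4 := @Ordinal 4 0 isT.
Definition o1 : 'I_4 := @Ordinal 4 1 isT.
Definition o2 : 'I_4 := @Ordinal 4 2 isT.
Definition o3 : 'I_4 := @Ordinal 4 3 isT.
Definition B4 : finType := {ffun 'I_4 -> bool}.
Definition fA4 (z : {ffun 'I_4 -> bool}) : bool := Afun (z o0) (z o1) (z o2) (z o3).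
Definition phi4 (z : {ffun 'I_4 -> bool}) : Q4 := (z o0, z o1, z o2, z o3).
Definition phi4' (z : Q4) : {ffun 'I_4 -> bool} := [ffun k => qq z k].

Lemma phi4_bij : bijective phi4.
Proof.
exists phi4'.
  move=> z; apply/ffunP => k; rewrite ffunE /qq /phi4 /=.
  case: k => [[|[|[|[|k]]]] Hk] //=; congr (z _); exact: val_inj.
by move=> [[[a b] c] d]; rewrite /phi4 /phi4' !ffunE.
Qed.

Lemma phi4_q (z : {ffun 'I_4 -> bool}) (k : 'I_4) : z (id k) = qq (phi4 z) k.
Proof.
rewrite /qq /phi4 /=.
case: k => [[|[|[|[|k]]]] Hk] //=; congr (z _); exact: val_inj.
Qed.

Lemma id_bij4 : bijective (@id 'I_4).
Proof. by exists id. Qed.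

Lemma certB4 (R : realType) : Cert (fun (z : {ffun 'I_4 -> bool}) (k : 'I_4) => z k) fA4 (10 : R) 4.
Proof.
apply: (cert_iso (phi := phi4) (psi := id) phi4_bij id_bij4 phi4_q _ (certQ4 R)).
by [].
Qed.

Lemma ubB4 (R : realType) : UB (fun (z : {ffun 'I_4 -> bool}) (k : 'I_4) => z k) fA4 (2 / 5 : R).
Proof.
apply: (ub_iso (phi := phi4) (psi := id) id_bij4 phi4_q _ (ubQ4 R)).
by [].
Qed.

Local Close Scope ring_scope.

Lemma iterA_ext d (X Y : nat -> bool) : (forall n, n < 4 ^ d -> X n = Y n) -> iterA d X = iterA d Y.
Proof.
elim: d X Y => [|d IH] X Y h /=; first by apply: h; rewrite expn0.
have e : 4 ^ d.+1 = 4 * 4 ^ d by rewrite expnS.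
congr Afun; apply: IH => n hn; apply: h; rewrite e; lia.
Qed.

Lemma insub_x N (x : bits N) i (H : i < N) :
  (match insub i with Some j => x j | None => false end) = x (Ordinal H).
Proof. by rewrite insubT; congr (x _); apply: val_inj. Qed.

Definition qC d (x : bits (4 ^ d)) (i : 'I_(4 ^ d)) : bool := x i.

Lemma psi_lt d (k : 'I_4) (j : 'I_(4 ^ d)) : k * 4 ^ d + j < 4 ^ d.+1.
Proof.
have e : 4 ^ d.+1 = 4 * 4 ^ d by rewrite expnS.
have hk := ltn_ord k; have hj := ltn_ord j; rewrite e; nia.
Qed.
Definition psiC d (kj : 'I_4 * 'I_(4 ^ d)) : 'I_(4 ^ d.+1) := Ordinal (psi_lt kj.1 kj.2).

Lemma div_lt d (i : 'I_(4 ^ d.+1)) : i %/ 4 ^ d < 4.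
Proof. by rewrite ltn_divLR ?expn_gt0 // -expnS. Qed.
Lemma mod_lt d (i : 'I_(4 ^ d.+1)) : i %% 4 ^ d < 4 ^ d.
Proof. by rewrite ltn_pmod ?expn_gt0. Qed.
Definition psiC' d (i : 'I_(4 ^ d.+1)) : 'I_4 * 'I_(4 ^ d) := (Ordinal (div_lt i), Ordinal (mod_lt i)).

Lemma psiCK d : cancel (@psiC d) (@psiC' d).
Proof.
move=> [k j]; rewrite /psiC /psiC'; congr pair; apply: val_inj => /=.
  by rewrite divnMDl ?expn_gt0 // divn_small ?addn0.
by rewrite modnMDl modn_small.
Qed.
Lemma psiC'K d : cancel (@psiC' d) (@psiC d).
Proof. by move=> i; apply: val_inj => /=; rewrite -divn_eq. Qed.
Lemma psiC_bij d : bijective (@psiC d).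
Proof. exists (@psiC' d); [exact: psiCK | exact: psiC'K]. Qed.

Definition phiC d (x : bits (4 ^ d.+1)) : {ffun 'I_4 -> bits (4 ^ d)} :=
  [ffun k => [ffun j => x (psiC (k, j))]].
Definition phiC' d (y : {ffun 'I_4 -> bits (4 ^ d)}) : bits (4 ^ d.+1) :=
  [ffun i => y (psiC' i).1 (psiC' i).2].

Lemma phiC_bij d : bijective (@phiC d).
Proof.
exists (@phiC' d).
  move=> x; apply/ffunP => i; rewrite /phiC /phiC' !ffunE.
  by rewrite -surjective_pairing psiC'K.
move=> y; apply/ffunP => k; apply/ffunP => j; rewrite /phiC /phiC' !ffunE.
by rewrite psiCK.
Qed.

Lemma Aiter_S d (x : bits (4 ^ d.+1)) : @Aiter d.+1 x = fA4 (zx (@Aiter d) (phiC x)).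
Proof.
have e : 4 ^ d.+1 = 4 * 4 ^ d by rewrite expnS.
rewrite /Aiter /fA4 /zx !ffunE /=.
congr Afun; apply: iterA_ext => n hn.
- have h : n < 4 ^ d.+1 by rewrite e; lia.
  rewrite (insub_x x h) (insub_x _ hn) !ffunE.
  by congr (x _); apply: val_inj => /=; lia.
- have h : 4 ^ d + n < 4 ^ d.+1 by rewrite e; lia.
  rewrite (insub_x x h) (insub_x _ hn) !ffunE.
  by congr (x _); apply: val_inj => /=; lia.
- have h : 2 * 4 ^ d + n < 4 ^ d.+1 by rewrite e; lia.
  rewrite (insub_x x h) (insub_x _ hn) !ffunE.
  by congr (x _); apply: val_inj => /=; lia.
- have h : 3 * 4 ^ d + n < 4 ^ d.+1 by rewrite e; lia.
  rewrite (insub_x x h) (insub_x _ hn) !ffunE.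
  by congr (x _); apply: val_inj => /=; lia.
Qed.

Definition oz : 'I_(4 ^ 0) := @Ordinal (4 ^ 0) 0 isT.
Lemma ordz (i : 'I_(4 ^ 0)) : i = oz.
Proof. apply: val_inj => /=; have : (i < 1)%N := ltn_ord i. by case: (nat_of_ord i). Qed.
Lemma Aiter0 (x : bits (4 ^ 0)) : @Aiter 0 x = x oz.
Proof. by rewrite /Aiter /= (insub_x x (isT : 0 < 4 ^ 0)); congr (x _); apply: val_inj. Qed.

Definition hb (b : bool) : bits (4 ^ 0) := [ffun _ => b].
Lemma hb_bij : bijective hb.
Proof.
exists (fun x : bits (4 ^ 0) => x oz); first by move=> b; rewrite /hb ffunE.
by move=> x; apply/ffunP => i; rewrite /hb !ffunE (ordz i).
Qed.

Local Open Scope ring_scope.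

Lemma sum_bits0 (R : realType) (F : bits (4 ^ 0) -> R) : \sum_x F x = F (hb true) + F (hb false).
Proof. by rewrite (sum_reidx _ _ hb_bij) /= big_bool. Qed.

Lemma row0 (R : realType) (x : bits (4 ^ 0)) : \sum_(y : bits (4 ^ 0)) ((x oz != y oz)%:R : R) = 1.
Proof. by rewrite sum_bits0 /hb !ffunE; case: (x oz); rewrite /= ?add0r ?addr0. Qed.

Lemma cert0 (R : realType) : Cert (@qC 0) (@Aiter 0) (1 : R) 1.
Proof.
exists (fun x y : bits (4 ^ 0) => (x oz != y oz)%:R), (fun _ => 1), (fun _ _ _ => 1), (fun _ _ => 1); split.
- move=> x y; split; [exact: ler0n | by rewrite eq_sym | by rewrite !Aiter0 => ->; rewrite eqxx].
- split; first by move=> _; exact: ler01.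
  by move=> b; exists (hb b); split; [rewrite Aiter0 /hb ffunE | exact: ltr01].
- by move=> x; under eq_bigr do rewrite mulr1; rewrite row0 mulr1.
- split; first by move=> *; split; [exact: ltr01 | exact: mulr1].
  move=> x v; under eq_bigr do rewrite mulr1.
  apply: (le_trans (sum_sub (fun y => qC x v != qC y v) _)); first by move=> y; exact: ler0n.
  by rewrite row0.
- split; first by move=> *; split; [exact: ltr01 | exact: mulr1].
  by move=> x; under eq_bigr do rewrite mulr1; rewrite row0.
Qed.

Lemma ub0 (R : realType) : UB (@qC 0) (@Aiter 0) (1 : R).
Proof.
exists (fun _ _ => 1).
  move=> x; split; first by move=> _; exact: ler01.
  by rewrite sumr_const card_ord expn0.
move=> x y; rewrite !Aiter0 => hxy; rewrite /ovl /qC (bigD1 oz) //= mulr1 sqrtr1.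
have : 0 <= \sum_(i < 4 ^ 0 | (x i != y i) && (i != oz)) (1 : R).
  by apply: sumr_ge0 => i _; exact: ler01.
lra.
Qed.

Lemma cert_all (R : realType) d : exists lam s : R,
  [/\ 0 < lam, 0 < s, s / lam = (2 / 5) ^+ d & Cert (@qC d) (@Aiter d) lam s].
Proof.
elim: d => [|d [lam [s [lam0 s0 hr C]]]].
  exists 1, 1; split; [exact: ltr01 | exact: ltr01 | by rewrite divr1 expr0 | exact: cert0].
have C2 := cert_comp (ltW lam0) (ltW s0) (certB4 R) C.
have C3 := cert_iso (phiC_bij d) (psiC_bij d) _ (@Aiter_S d) C2.
exists (10 * lam ^+ 4), (4 * s * lam ^+ 3); split.
- by apply: mulr_gt0; [exact: ltr0n | exact: exprn_gt0].
- by apply: mulr_gt0; [apply: mulr_gt0 => //; exact: ltr0n | exact: exprn_gt0].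
- rewrite [(2 / 5) ^+ d.+1]exprS -hr; field; exact: lt0r_neq0.
- apply: C3 => x [k j]; by rewrite /qC /cq /phiC !ffunE.
Qed.

Lemma ub_all (R : realType) d : UB (@qC d) (@Aiter d) ((2 / 5 : R) ^+ d).
Proof.
elim: d => [|d IH]; first by rewrite expr0; exact: ub0.
have c0 : 0 <= (2 / 5 : R) ^+ d by apply: exprn_ge0; lra.
have U2 := ub_comp c0 (ubB4 R) IH.
rewrite exprS.
apply: (ub_iso (phi := @phiC d) (psiC_bij d) _ (@Aiter_S d) U2).
by move=> x [k j]; rewrite /qC /cq /phiC !ffunE.
Qed.

Local Close Scope ring_scope.
Local Open Scope ring_scope.

Lemma pv_ge (R : realType) N (p : bits N -> 'I_N -> R) (x y : bits N) (c : R) :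
  0 < c -> overlap p x y <= c -> (c^-1%:E <= pair_val p x y)%E.
Proof.
move=> c0 h; rewrite /pair_val; case: eqP => [_|ne]; first exact: leey.
have o0 : 0 < overlap p x y.
  rewrite lt0r; apply/andP; split; first by apply/eqP.
  by apply: sumr_ge0 => i _; exact: sqrtr_ge0.
by rewrite lee_fin lef_pV2 ?posrE.
Qed.

Unset Implicit Arguments.
Theorem mainTheorem16 (R : realType) (d : nat) (hd : (1 <= d)%N) :
  sumPI_is (@Aiter d) ((5 / 2 : R) ^+ d)%:E.
Proof.
have [p hp hc] := ub_all R d.
have [lam [s [lam0 s0 hr C]]] := cert_all R d.
have LB := cert_LB lam0 (ltW s0) C.
set c := (2 / 5 : R) ^+ d in hc hr.
have c0 : 0 < c by apply: exprn_gt0; lra.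
have vc : (5 / 2 : R) ^+ d = c^-1.
  by rewrite /c -exprVn; congr (_ ^+ _); rewrite invf_div.
rewrite vc.
have lower : forall p' : bits (4 ^ d) -> 'I_(4 ^ d) -> R, prob_family p' ->
    (c^-1%:E <= sumPI_obj (@Aiter d) p')%E.
  move=> p' hp'; have [x [y [hxy ho]]] := LB p' hp'.
  have hv : (c^-1%:E <= pair_val p' x y)%E by apply: pv_ge => //; rewrite -hr; exact: ho.
  apply: (le_trans hv).
  exact: (le_bigmax_cond _ (j := (x, y)) (P := fun xy : bits (4 ^ d) * bits (4 ^ d) => @Aiter d xy.1 != @Aiter d xy.2)).
split; last exact: lower.
exists p => //.
apply/eqP; rewrite eq_le; apply/andP; split; last exact: lower.
apply: bigmax_le; first exact: leNye.
move=> [x y] /= hxy.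
have hov := hc x y hxy.
have o0 : 0 < overlap p x y by apply: lt_le_trans hov.
rewrite /pair_val (gt_eqF o0) lee_fin lef_pV2 ?posrE //.
Qed.
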